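(* Let $e=(e_1,\dots,e_n)\in\mathbf{I}_n(201,210)$ have parameters $(p,q)$. Then there are exactly $p+q$ sequences $(e_1,\dots,e_n,k)\in\mathbf{I}_{n+1}(201,210)$, and their parameters are, as a multiset, $$(p,q+1),(p-1,q+2),\dots,(1,q+p),\ (p+1,q),\ \underbrace{(p+2,1),\dots,(p+2,1)}_{q-1}.$$
   Context: $\mathbf{I}_n=\{(e_1,\dots,e_n)\in\mathbb{N}^n:0\le e_i<i\}$. $\mathbf{I}_n(201,210)$ is the set of $e\in\mathbf{I}_n$ with no indices $i<j<k$ such that $e_j<e_k<e_i$ and no indices $i<j<k$ such that $e_i>e_j>e_k$. The parameters of $e\in\mathbf{I}_n(201,210)$ are $(p,q)$ where $p=|\{k>e_n:(e_1,\dots,e_n,k)\in\mathbf{I}_{n+1}(201,210)\}|$ and $q=|\{k\le e_n:(e_1,\dots,e_n,k)\in\mathbf{I}_{n+1}(201,210)\}|$. *)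

(* Defs.v *)
From mathcomp Require Import all_boot.
Set Implicit Arguments. Unset Strict Implicit. Unset Printing Implicit Defensive.

(* Sequences e = (e_1,...,e_n) are represented as s : seq nat with
   e_(i+1) = nth 0 s i (0-based positions). *)

Definition is_inv_seq (n : nat) (e : seq nat) : bool :=
  (size e == n) && [forall i : 'I_(size e), nth 0 e i < i.+1].

Definition contains201 (e : seq nat) : bool :=
  [exists i : 'I_(size e), exists j : 'I_(size e), exists k : 'I_(size e),
     [&& i < j, j < k, nth 0 e j < nth 0 e k & nth 0 e k < nth 0 e i]].

Definition contains210 (e : seq nat) : bool :=
  [exists i : 'I_(size e), exists j : 'I_(size e), exists k : 'I_(size e),
     [&& i < j, j < k, nth 0 e j < nth 0 e i & nth 0 e k < nth 0 e j]].

Definition in_I201_210 (n : nat) (e : seq nat) : bool :=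
  [&& is_inv_seq n e, ~~ contains201 e & ~~ contains210 e].

(* The children (e_1,...,e_n,k) in I_{n+1}(201,210), listed by increasing k.
   Every candidate k with (e,k) in I_{n+1} satisfies k < n+1, so ranging
   over iota 0 (size e).+1 loses nothing. *)
Definition children (e : seq nat) : seq (seq nat) :=
  [seq rcons e k | k <- iota 0 (size e).+1 & in_I201_210 (size e).+1 (rcons e k)].

Definition lastE (e : seq nat) : nat := last 0 e.

Definition param_p (e : seq nat) : nat :=
  count (fun k => (lastE e < k) && in_I201_210 (size e).+1 (rcons e k))
        (iota 0 (size e).+1).
Definition param_q (e : seq nat) : nat :=
  count (fun k => (k <= lastE e) && in_I201_210 (size e).+1 (rcons e k))
        (iota 0 (size e).+1).
Definition params (e : seq nat) : nat * nat := (param_p e, param_q e).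

(* Main.v *)
Require Import Defs.
From mathcomp Require Import all_boot.
From mathcomp Require Import zify.

Lemma cnt_lt b a x : count (fun y => y < b) (iota a x) = minn (b - a) x.
Proof.
elim: x a => [|x IH] a /=; first by rewrite minn0.
rewrite IH; case: ltnP => h /=; lia.
Qed.

Lemma cnt_ge b a x : count (fun y => b <= y) (iota a x) = x - (b - a).
Proof.
elim: x a => [|x IH] a //=.
rewrite IH; case: leqP => h /=; lia.
Qed.

Definition good (s : seq nat) : Prop := forall i j k, i < j -> j < k -> k < size s ->
  nth 0 s j < nth 0 s i -> nth 0 s k < nth 0 s i -> nth 0 s j = nth 0 s k.

Lemma goodP s : (~~ contains201 s && ~~ contains210 s) <-> good s.
Proof.
split.
- case/andP => h1 h2 i j k ij jk ks ji ki.
  have js : j < size s by lia.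
  have hi : i < size s by lia.
  case: (ltngtP (nth 0 s j) (nth 0 s k)) => // c.
  + exfalso; move/negP: h1; apply; apply/existsP; exists (Ordinal hi);
    apply/existsP; exists (Ordinal js); apply/existsP; exists (Ordinal ks).
    by rewrite /= ij jk c ki.
  + exfalso; move/negP: h2; apply; apply/existsP; exists (Ordinal hi);
    apply/existsP; exists (Ordinal js); apply/existsP; exists (Ordinal ks).
    by rewrite /= ij jk c ji.
- move=> g; apply/andP; split; apply/negP =>
    /existsP [i /existsP [j /existsP [k /and4P [ij jk a b]]]].
  + have := g i j k ij jk (ltn_ord k) (ltn_trans a b) b. lia.
  + have := g i j k ij jk (ltn_ord k) a (ltn_trans b a). lia.
Qed.

Lemma invP N s : is_inv_seq N s <-> size s = N /\ (forall i, i < size s -> nth 0 s i < i.+1).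
Proof.
split.
- case/andP => /eqP hs /forallP h; split=>// i hi; exact (h (Ordinal hi)).
- case => hs h; apply/andP; split; first by apply/eqP.
  by apply/forallP => i; apply: h.
Qed.

Definition valid e := in_I201_210 (size e) e.
Definition okk e k := in_I201_210 (size e).+1 (rcons e k).
Definition ext e k : Prop := forall i j, i < j -> j < size e ->
  nth 0 e j < nth 0 e i -> k < nth 0 e i -> nth 0 e j = k.

Lemma validP e : valid e <-> (forall i, i < size e -> nth 0 e i < i.+1) /\ good e.
Proof.
rewrite /valid /in_I201_210; split.
- case/andP => /invP [_ h] /goodP g; by [].
- case => h g; apply/andP; split; [apply/invP | apply/goodP] => //.
Qed.

Lemma good_rcons e k : good (rcons e k) <-> good e /\ ext e k.
Proof.
split.
- move=> g; split.
  + move=> i j k' ij jk ks; have := g i j k' ij jk.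
    rewrite size_rcons !nth_rcons.
    have -> : i < size e by lia. have -> : j < size e by lia. rewrite ks.
    move=> h; apply: h; lia.
  + move=> i j ij js; have := g i j (size e) ij js.
    rewrite size_rcons !nth_rcons ltnn eqxx.
    have -> : i < size e by lia. rewrite js. move=> h a b; apply: h => //.
- case=> g x i j k' ij jk; rewrite size_rcons !nth_rcons => ks.
  have -> : i < size e by lia. have -> : j < size e by lia.
  case: (ltnP k' (size e)) => ks1.
  + by apply: g.
  + have -> : k' == size e by lia.
    rewrite /= => a b; apply: (x i j) => //; lia.
Qed.

Lemma okkP e k : valid e -> (okk e k <-> k <= size e /\ ext e k).
Proof.
move=> /validP [h g]; rewrite /okk /in_I201_210; split.
- case/andP => /invP [_ h'] /goodP /good_rcons [_ x]; split=>//.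
  have := h' (size e); rewrite size_rcons nth_rcons ltnn eqxx; apply; lia.
- case => kb x; apply/andP; split; [apply/invP | apply/goodP/good_rcons] => //.
  split; first by rewrite size_rcons.
  move=> i; rewrite size_rcons nth_rcons; move=> b; case: (ltnP i (size e)) => a; first by apply: h.
  have -> : i == size e by lia. simpl; lia.
Qed.

Definition mx (e : seq nat) := foldr maxn 0 e.

Lemma mx_ge e i : i < size e -> nth 0 e i <= mx e.
Proof.
elim: e i => [|x e IH] [|i] //= h; first by apply: leq_maxl.
apply: leq_trans (IH i h) (leq_maxr _ _).
Qed.

Lemma mx_in e : 0 < size e -> exists2 i, i < size e & nth 0 e i = mx e.
Proof.
elim: e => [|x e IH] //= _.
case: (leqP (mx e) x) => h.
- by exists 0 => //; rewrite (maxn_idPl h).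
- case: e IH h => [|y e] IH h //.
  have [i hi hn] := IH isT.
  by exists i.+1 => //; rewrite /= hn (maxn_idPr (ltnW h)).
Qed.

Lemma mx_rcons e k : mx (rcons e k) = maxn (mx e) k.
Proof.
elim: e => [|x e IH] /=; first by rewrite maxn0 max0n.
by rewrite IH maxnA.
Qed.

Arguments mx_ge {e i}.
Arguments mx_in {e}.

Section S.
Variable e : seq nat.
Hypothesis ve : valid e.
Hypothesis ne : 0 < size e.
Let n := size e.
Let L := last 0 e.
Let m := mx e.

Lemma Lnth : L = nth 0 e n.-1.
Proof. by rewrite /L -nth_last. Qed.

Lemma hbnd : forall i, i < n -> nth 0 e i < i.+1.
Proof. by case/validP: ve. Qed.
Lemma hgood : good e.
Proof. by case/validP: ve. Qed.

Lemma Lm : L <= m.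
Proof. rewrite Lnth; apply: mx_ge; rewrite /n; lia. Qed.

Lemma mn : m < n.
Proof. have [i hi hm] := mx_in ne. have := hbnd _ hi; rewrite /m -hm /n; lia. Qed.

Lemma Ln : L < n.
Proof. have := Lm; have := mn; lia. Qed.

Lemma G1 k : m <= k -> k <= n -> okk e k.
Proof.
move=> h1 h2; apply/(okkP _ _ ve); split=> // i j ij js a b.
have := mx_ge (ltn_trans ij js); rewrite -/m; lia.
Qed.

Lemma Gb k : okk e k -> k <= n.
Proof. by case/(okkP _ _ ve). Qed.

Lemma G2 : okk e L.
Proof.
apply/(okkP _ _ ve); split; first by have := Ln; rewrite /n; lia.
move=> i j ij js a b.
case: (ltnP j n.-1) => hj.
- have := hgood _ _ _ ij hj (_ : n.-1 < size e); rewrite -Lnth; apply => //; rewrite /n; lia.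
- have -> : j = n.-1 by rewrite /n; lia. by rewrite Lnth.
Qed.

Lemma G3 k : L < m -> okk e k -> k < m -> k = L.
Proof.
move=> h1 /(okkP _ _ ve) [_ x] h3.
have [i hi hn] := mx_in ne.
have hin : i < n.-1.
  have : i != n.-1 by apply/eqP => ei; move: h1; rewrite Lnth -ei -/m hn ltnn.
  rewrite /n in hi *; lia.
have := x i n.-1 hin (_ : n.-1 < size e); rewrite -Lnth hn -/m => h.
by rewrite -h // /n; lia.
Qed.

Lemma G5 k : m <= k -> okk e k -> forall k',
  okk (rcons e k) k' = okk e k' || (k' == n.+1).
Proof.
move=> hk ok k'.
have vc : valid (rcons e k) by rewrite /valid size_rcons.
apply/idP/idP.
- move/(okkP _ _ vc) => [kb x]; rewrite size_rcons in kb.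
  case: (ltnP k' n.+1) => h; last by apply/orP; right; apply/eqP; rewrite /n; lia.
  apply/orP; left; apply/(okkP _ _ ve); split; first by rewrite /n in h *; lia.
  move=> i j ij js a b; have := x i j ij; rewrite size_rcons !nth_rcons.
  have -> : i < size e by lia. rewrite js; apply => //; lia.
- case/orP => [/(okkP _ _ ve) [kb x] | /eqP ->]; apply/(okkP _ _ vc); rewrite size_rcons.
  + split; first by lia.
    move=> i j ij js; rewrite size_rcons in js; rewrite !nth_rcons.
    have hi : i < size e by lia. rewrite hi.
    case: (ltnP j (size e)) => hj; first exact: x.
    have -> : j == size e by lia.
    move=> a; have := mx_ge hi; rewrite -/m; lia.
  + split => // i j ij js; rewrite size_rcons in js; rewrite !nth_rcons.
    have hi : i < size e by lia. rewrite hi.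
    move=> a b; have := mx_ge hi; rewrite -/m; have := mn; rewrite /n; lia.
Qed.

Lemma cnt_le b a x : count (fun y => y <= b) (iota a x) = minn (b.+1 - a) x.
Proof. by rewrite -cnt_lt; apply: eq_count => y; rewrite ltnS. Qed.

Lemma iota_split : iota 0 n.+1 = iota 0 m ++ iota m (n.+1 - m).
Proof.
have := mn; rewrite -/n -/m => h.
by rewrite -[in iota m _](add0n m) -iotaD subnKC //; lia.
Qed.

Lemma filt_hi : filter (okk e) (iota m (n.+1 - m)) = iota m (n.+1 - m).
Proof.
apply/all_filterP/allP => k; rewrite mem_iota => /andP [h1 h2].
have := mn; rewrite -/n -/m => h.
apply: G1 => //; rewrite -/n; lia.
Qed.

Definition F := filter (okk e) (iota 0 n.+1).
Definition s0 := filter (okk e) (iota 0 m).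

Lemma FILT1 : L < m -> F = L :: iota m (n.+1 - m).
Proof.
move=> h; rewrite /F iota_split filter_cat filt_hi.
rewrite (@eq_in_filter _ _ (pred1 L)) ?filter_pred1_uniq ?iota_uniq //.
  by rewrite mem_iota.
move=> k; rewrite mem_iota => /andP [_ hk] /=.
apply/idP/eqP => [ok | ->]; last exact: G2.
exact: G3.
Qed.

Lemma FILT2 : F = s0 ++ iota m (n.+1 - m).
Proof. by rewrite /F iota_split filter_cat filt_hi. Qed.

Definition Q k := count (fun k' => (k' <= k) && okk e k') (iota 0 n.+1).

Lemma QF k : Q k = count (fun k' => k' <= k) F.
Proof. by rewrite /F count_filter. Qed.

Lemma pF : param_p e = count (fun k => L < k) F.
Proof. by rewrite /F count_filter. Qed.

Lemma qF : param_q e = Q L.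
Proof. by []. Qed.

Lemma P1 : L < m -> param_p e = n.+1 - m.
Proof.
move=> h; rewrite pF FILT1 // /= ltnn add0n cnt_ge; lia.
Qed.

Lemma Q1 : L < m -> forall k, m <= k -> k <= n -> Q k = (k - m).+2.
Proof.
move=> h k h1 h2; rewrite QF FILT1 //= (_ : L <= k) ?cnt_le; lia.
Qed.

Lemma s0lt k : k \in s0 -> k < m.
Proof. by rewrite mem_filter mem_iota => /andP [_ /andP [_ h]]. Qed.

Lemma P2 : ~~ (L < m) -> param_p e = n - m.
Proof.
move=> h; have hL : L = m by have := Lm; lia.
rewrite pF FILT2 count_cat hL.
rewrite (@eq_in_count _ _ pred0) ?count_pred0; last first.
  by move=> k /s0lt /=; lia.
have := mn; rewrite -/n -/m => hm.
rewrite cnt_ge; lia.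
Qed.

Lemma Q2 : forall k, m <= k -> k <= n -> Q k = size s0 + (k - m).+1.
Proof.
move=> k h1 h2; rewrite QF FILT2 count_cat.
rewrite (@eq_in_count _ _ predT) ?count_predT; last first.
  by move=> k' /s0lt /=; lia.
rewrite cnt_le (minn_idPl _) ?subSn //; rewrite /n; lia.
Qed.

Lemma L_eq : ~~ (L < m) -> L = m.
Proof. by have := Lm; lia. Qed.

Lemma Q1L : L < m -> Q L = 1.
Proof.
move=> h; rewrite QF FILT1 //= leqnn cnt_le.
have -> : L.+1 - m = 0 by apply/eqP; rewrite subn_eq0.
by rewrite min0n.
Qed.

End S.

Lemma map_constE (T U : Type) (c : U) (s : seq T) : map (fun _ => c) s = nseq (size s) c.
Proof. by elim: s => //= x s ->. Qed.

Lemma C1 e k : valid e -> 0 < size e -> okk e k -> k < mx e ->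
  params (rcons e k) = ((size e).+2 - mx e, 1).
Proof.
move=> ve ne ok h.
have vc : valid (rcons e k) by rewrite /valid size_rcons.
have nc : 0 < size (rcons e k) by rewrite size_rcons.
have mc : mx (rcons e k) = mx e by rewrite mx_rcons (maxn_idPl (ltnW h)).
have lc : last 0 (rcons e k) = k by rewrite last_rcons.
rewrite /params (P1 _ vc nc) ?lc ?mc // size_rcons; congr pair.
rewrite (qF (rcons e k)) (Q1L _ vc nc) // lc mc //.
Qed.

Lemma C2 e k : valid e -> 0 < size e -> mx e <= k -> k <= size e ->
  params (rcons e k) = ((size e).+1 - k, Q e k).
Proof.
move=> ve ne h1 h2.
have ok : okk e k by apply: G1.
have vc : valid (rcons e k) by rewrite /valid size_rcons.
have nc : 0 < size (rcons e k) by rewrite size_rcons.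
have mc : mx (rcons e k) = k by rewrite mx_rcons (maxn_idPr h1).
have lc : last 0 (rcons e k) = k by rewrite last_rcons.
rewrite /params (P2 _ vc nc) ?lc ?mc ?ltnn // size_rcons; congr pair.
rewrite (qF (rcons e k)) /Q lc size_rcons.
rewrite -addn1 iotaD count_cat add0n.
rewrite [X in _ + X](_ : _ = 0) ?addn0; last by rewrite /= leqNgt ltnS h2.
apply: eq_in_count => k'; rewrite mem_iota => /andP [_ hk'] /=.
rewrite (G5 _ ve ne _ h1 ok) (_ : k' == (size e).+1 = false) ?orbF //.
by apply/negbTE; rewrite neq_ltn hk'.
Qed.

Lemma iota_shift a k : iota a k = map (addn a) (iota 0 k).
Proof. by rewrite -iotaDl addn0. Qed.

Theorem lemma4p5 (n : nat) (e : seq nat) :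
  0 < n -> in_I201_210 n e ->
  let p := param_p e in
  let q := param_q e in
  size (children e) = p + q /\
  perm_eq (map params (children e))
    ([seq (p - i, q + 1 + i) | i <- iota 0 p]
       ++ (p.+1, q) :: nseq (q - 1) (p + 2, 1)).
Proof.
move=> n0 hv; cbv zeta.
have hs : size e = n by case/and3P: hv => /invP [].
have ve : valid e by rewrite /valid hs.
have ne : 0 < size e by rewrite hs.
have hc : children e = map (rcons e) (F e) by [].
have mn' := mn _ ve ne.
split.
  rewrite hc size_map pF qF QF.
  have hh := count_predC (fun k => last 0 e < k) (F e).
  rewrite -hh; congr (_ + _).
  by apply: eq_count => k; rewrite /= ltnNge negbK.
rewrite hc -map_comp.
case h: ((last 0 e) < (mx e)).
- have hp := P1 _ ve ne h; have hq := Q1L _ ve ne h.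
  rewrite hp qF hq (FILT1 _ ve ne h) /= (C1 _ _ ve ne (G2 _ ve ne) h).
  rewrite (iota_shift (mx e)) -map_comp.
  have -> : map ((params \o rcons e) \o addn (mx e)) (iota 0 ((size e).+1 - mx e)) = [seq ((size e).+1 - (mx e) - i, 1 + 1 + i) | i <- iota 0 ((size e).+1 - (mx e))].
    apply/eq_in_map => i; rewrite mem_iota => /andP [_ hi] /=.
    rewrite (C2 _ _ ve ne) ?(Q1 _ ve ne h) ?leq_addr; try lia.
    congr pair; lia.
  have -> : (size e).+2 - (mx e) = ((size e).+1 - (mx e)).+1 by lia.
  apply/permP => a; rewrite count_cat /=; lia.
- have hL : (last 0 e) = (mx e) by have := Lm _ ve ne; lia.
  have hp := P2 _ ve ne (negbT h).
  have hq : param_q e = size (s0 e) + 1.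
    by rewrite qF hL (Q2 _ ve ne) // ?subnn ?addn1 //; lia.
  rewrite hp hq addnK (FILT2 _ ve ne) map_cat.
  have -> : (size e).+1 - mx e = ((size e) - (mx e)).+1 by lia.
  rewrite /=.
  have -> : map (params \o rcons e) (s0 e) = nseq (size (s0 e)) (size e - (mx e) + 2, 1).
    rewrite -(@map_constE _ _ _ (s0 e)); apply/eq_in_map => k hk /=.
    have hk' := s0lt _ _ hk.
    rewrite (C1 _ _ ve ne) //; first by congr pair; lia.
    by move: hk; rewrite mem_filter => /andP [].
  rewrite (C2 _ _ ve ne) ?leqnn; last by lia.
  rewrite (Q2 _ ve ne) ?leqnn ?subnn; last by lia.
  rewrite (iota_shift (mx e).+1) -map_comp.
  have -> : map ((params \o rcons e) \o addn (mx e).+1) (iota 0 (size e - mx e)) = [seq (size e - (mx e) - i, size (s0 e) + 1 + 1 + i) | i <- iota 0 (size e - (mx e))].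
    apply/eq_in_map => i; rewrite mem_iota => /andP [_ hi] /=.
    rewrite (C2 _ _ ve ne) ?(Q2 _ ve ne); try (lia).
    congr pair; lia.
  have -> : (size e).+1 - (mx e) = (size e - (mx e)).+1 by lia.
  apply/permP => a; rewrite !count_cat /=; lia.
all: done.
Qed.
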